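(* Let $N\ge 1$, let $\rho$ be any $N$-qubit density matrix, let $O$ be any Hermitian $2^N\times 2^N$ matrix, and let $\hat\sigma$ be a SIC POVM classical shadow of $\rho$. Then $$\mathrm{Var}\big[\mathrm{tr}(O\hat\sigma)\big]\le 3^N\,\mathrm{tr}(O^2).$$
   Context: Let $|\psi_1\rangle,\dots,|\psi_4\rangle\in\mathbb C^2$ be unit vectors forming a single-qubit SIC set, i.e. $|\langle\psi_i|\psi_j\rangle|^2=1/3$ for all $i\neq j$ (their Bloch vectors form a regular tetrahedron); then $\{\tfrac12|\psi_i\rangle\langle\psi_i|\}_{i=1}^4$ is a POVM (the single-qubit SIC POVM). Performing this measurement on each qubit of an $N$-qubit state $\rho$ yields an outcome string $(i_1,\dots,i_N)\in\{1,2,3,4\}^N$ with probability $\Pr[i_1\cdots i_N\mid\rho]=2^{-N}\langle\psi_{i_1}\otimes\cdots\otimes\psi_{i_N}|\,\rho\,|\psi_{i_1}\otimes\cdots\otimes\psi_{i_N}\rangle$. The (SIC POVM) classical shadow associated with this random outcome is the random Hermitian matrix $\hat\sigma=\bigotimes_{n=1}^N\big(3|\psi_{i_n}\rangle\langle\psi_{i_n}|-\mathbb I\big)$. Expectations and variances are taken with respect to the outcome distribution. *)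

(* Defs.v *)
(* Complex numbers are modelled as R[i] for an arbitrary
   real closed field R (this includes the classical reals). *)
From mathcomp Require Import all_boot all_algebra.
From mathcomp Require Export complex.
Import GRing.Theory Num.Theory.
Set Implicit Arguments.
Unset Strict Implicit.
Unset Printing Implicit Defensive.
Local Open Scope ring_scope.

Definition adjmx (C : numClosedFieldType) m n (A : 'M[C]_(m, n)) : 'M[C]_(n, m) :=
  (map_mx Num.conj A)^T.

Definition is_hermitian_mx (C : numClosedFieldType) n (A : 'M[C]_n) : Prop :=
  adjmx A = A.

Definition psd (C : numClosedFieldType) n (A : 'M[C]_n) : Prop :=
  is_hermitian_mx A /\ forall v : 'cV[C]_n, 0 <= (adjmx v *m A *m v) 0 0.

Definition density_matrix (C : numClosedFieldType) n (rho : 'M[C]_n) : Prop :=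
  psd rho /\ \tr rho = 1.

Definition braket (C : numClosedFieldType) n (u v : 'cV[C]_n) : C :=
  (adjmx u *m v) 0 0.

Definition qubit_SIC (C : numClosedFieldType) (psi : 'I_4 -> 'cV[C]_2) : Prop :=
  (forall i, braket (psi i) (psi i) = 1) /\
  (forall i j, i != j -> `|braket (psi i) (psi j)| ^+ 2 = 3^-1).

(* n-th bit (qubit n value) of a computational basis index k of (C^2)^{\otimes N} *)
Definition qbit N (n : 'I_N) (k : 'I_(2 ^ N)) : 'I_2 := inord ((k %/ 2 ^ n) %% 2).

(* Kronecker (tensor) product A_0 \otimes ... \otimes A_{N-1} of 2x2 matrices,
   written entrywise in the computational basis *)
Definition kron (C : numClosedFieldType) N (A : 'I_N -> 'M[C]_2) : 'M[C]_(2 ^ N) :=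
  \matrix_(k, l) \prod_(n < N) A n (qbit n k) (qbit n l).

Definition kron_ket (C : numClosedFieldType) N (v : 'I_N -> 'cV[C]_2) : 'cV[C]_(2 ^ N) :=
  \col_k \prod_(n < N) v n (qbit n k) 0.

Definition outcome N := {ffun 'I_N -> 'I_4}.

Definition sic_prob (C : numClosedFieldType) (psi : 'I_4 -> 'cV[C]_2) N
  (rho : 'M[C]_(2 ^ N)) (s : outcome N) : C :=
  (2 ^+ N)^-1 * (adjmx (kron_ket (fun n => psi (s n))) *m rho
                   *m kron_ket (fun n => psi (s n))) 0 0.

Definition sic_shadow (C : numClosedFieldType) (psi : 'I_4 -> 'cV[C]_2) N
  (s : outcome N) : 'M[C]_(2 ^ N) :=
  kron (fun n => 3%:R *: (psi (s n) *m adjmx (psi (s n))) - 1%:M).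

Definition expectation (C : numClosedFieldType) N (p : outcome N -> C)
  (X : outcome N -> C) : C := \sum_(s : outcome N) p s * X s.

Definition variance (C : numClosedFieldType) N (p : outcome N -> C)
  (X : outcome N -> C) : C :=
  expectation p (fun s => (X s - expectation p X) ^+ 2).

(* Main.v *)
Require Import Defs.
From mathcomp Require Import all_boot all_order all_algebra complex.
From mathcomp Require Import ring.
Import Order.TTheory GRing.Theory Num.Theory.
Set Implicit Arguments.
Unset Strict Implicit.
Unset Printing Implicit Defensive.
Local Open Scope ring_scope.


Lemma bits_inj_nat N k l : (k < 2 ^ N)%N -> (l < 2 ^ N)%N ->
  (forall n, (n < N)%N -> k %/ 2 ^ n %% 2 = l %/ 2 ^ n %% 2)%N -> k = l.
Proof.
elim: N k l => [|N IH] k l.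
  by rewrite expn0 !ltnS !leqn0 => /eqP -> /eqP ->.
move=> hk hl h.
have h0 := h 0%N isT; rewrite expn0 !divn1 in h0.
have e : (k %/ 2 = l %/ 2)%N.
  apply: IH; first by rewrite ltn_divLR // -expnSr.
    by rewrite ltn_divLR // -expnSr.
  move=> n hn; have := h n.+1 hn.
  by rewrite -!divnMA -expnS.
by rewrite (divn_eq k 2) (divn_eq l 2) e h0.
Qed.

Lemma qbitE N (n : 'I_N) (k : 'I_(2 ^ N)) : (qbit n k : nat) = (k %/ 2 ^ n %% 2)%N.
Proof. by rewrite /qbit inordK // ltn_mod. Qed.

Definition bits N (k : 'I_(2 ^ N)) : {ffun 'I_N -> 'I_2} := [ffun n => qbit n k].

Lemma bits_inj N : injective (@bits N).
Proof.
move=> k l /ffunP h; apply/val_inj/(@bits_inj_nat N); rewrite ?ltn_ord // => n hn.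
have := h (Ordinal hn); rewrite !ffunE => /(congr1 val) /=. rewrite !qbitE //.
Qed.

Lemma bits_bij N : bijective (@bits N).
Proof. by apply: inj_card_bij; [exact: bits_inj | rewrite card_ffun !card_ord]. Qed.

Section Sums.
Variable C : numClosedFieldType.

Lemma sum_bits N (F : {ffun 'I_N -> 'I_2} -> C) :
  \sum_(k < 2 ^ N) F (bits k) = \sum_f F f.
Proof. by rewrite (reindex _ (onW_bij _ (@bits_bij N))). Qed.

Lemma sum_prod_bits N (G : 'I_N -> 'I_2 -> C) :
  \sum_(k < 2 ^ N) \prod_(n < N) G n (qbit n k) = \prod_(n < N) \sum_(b < 2) G n b.
Proof.
rewrite bigA_distr_bigA -sum_bits; apply: eq_bigr => k _.
by apply: eq_bigr => n _; rewrite ffunE.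
Qed.

Lemma prod_delta N (a b : 'I_(2 ^ N)) :
  \prod_(n < N) ((qbit n a == qbit n b)%:R : C) = (a == b)%:R.
Proof.
case: (eqVneq a b) => [->|hab]; first by rewrite big1 // => n _; rewrite eqxx.
case: (boolP [exists n, qbit n a != qbit n b]) => [/existsP [n hn]|/existsPn h].
  by rewrite (bigD1 n) //= (negbTE hn) mul0r.
case/eqP: hab; apply: bits_inj; apply/ffunP => n; rewrite !ffunE.
by have := h n; rewrite negbK => /eqP.
Qed.

End Sums.


Definition fcons (T : finType) N (t : T) (y : {ffun 'I_N -> T}) : {ffun 'I_N.+1 -> T} :=
  [ffun i => if unlift ord0 i is Some j then y j else t].

Lemma fcons_bij (T : finType) N :
  bijective (fun p : T * {ffun 'I_N -> T} => fcons p.1 p.2).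
Proof.
exists (fun x : {ffun 'I_N.+1 -> T} => (x ord0, [ffun j : 'I_N => x (lift ord0 j)])).
  case=> t y /=; rewrite /fcons ffunE unlift_none; congr pair.
  by apply/ffunP=> j; rewrite !ffunE liftK.
move=> x; apply/ffunP=> i; rewrite /fcons !ffunE.
by case: unliftP => [j ->|->] //; rewrite ffunE.
Qed.

Definition nrm (C : numClosedFieldType) (x : C) := x * x^*.

Section Tensor.
Variable C : numClosedFieldType.

Lemma sum_fcons (T : finType) N (F : {ffun 'I_N.+1 -> T} -> C) :
  \sum_x F x = \sum_(t : T) \sum_(y : {ffun 'I_N -> T}) F (fcons t y).
Proof.
rewrite pair_big /= (reindex _ (onW_bij _ (@fcons_bij T N))) /=.
by apply: eq_bigl.
Qed.

Lemma prod_fcons (J T : finType) N (a : J -> T -> C) s0 s x0 x :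
  \prod_(n < N.+1) a (fcons s0 s n) (fcons x0 x n) = a s0 x0 * \prod_(n < N) a (s n) (x n).
Proof.
rewrite big_ord_recl /fcons !ffunE unlift_none; congr (_ * _).
by apply: eq_bigr => n _; rewrite !ffunE liftK.
Qed.

Lemma sum_ffun0 (T : finType) (F : {ffun 'I_0 -> T} -> C) :
  \sum_x F x = F (ffun0 (card_ord 0)).
Proof.
rewrite (big_pred1 (ffun0 (card_ord 0))) // => x /=.
by symmetry; apply/eqP/ffunP => -[].
Qed.

Lemma nrm_ge0 (x : C) : 0 <= nrm x.
Proof. exact: mul_conjC_ge0. Qed.

Lemma tensor_bound (J T : finType) (a : J -> T -> C) (lam : C) :
  0 <= lam ->
  (forall g : T -> C, \sum_j nrm (\sum_t a j t * g t) <= lam * \sum_t nrm (g t)) ->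
  forall N (O : {ffun 'I_N -> T} -> C),
  \sum_(s : {ffun 'I_N -> J}) nrm (\sum_x O x * \prod_(n < N) a (s n) (x n))
    <= lam ^+ N * \sum_x nrm (O x).
Proof.
move=> hl H; elim=> [|N IH] O.
  rewrite (sum_ffun0 (fun s => nrm _)) (sum_ffun0 (fun x => _ * _)) big_ord0 mulr1 expr0 mul1r (sum_ffun0 (fun x => nrm (O x))).
  by [].
pose h (s' : {ffun 'I_N -> J}) (x0 : T) :=
  \sum_(x' : {ffun 'I_N -> T}) O (fcons x0 x') * \prod_(n < N) a (s' n) (x' n).
have E : forall s0 s', \sum_x O x * \prod_(n < N.+1) a (fcons s0 s' n) (x n)
    = \sum_x0 a s0 x0 * h s' x0.
  move=> s0 s'; rewrite sum_fcons; apply: eq_bigr => x0 _.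
  rewrite /h big_distrr; apply: eq_bigr => x' _.
  by rewrite prod_fcons mulrCA.
rewrite sum_fcons.
under eq_bigr do under eq_bigr do rewrite E.
rewrite exchange_big /=.
apply: le_trans (_ : _ <= \sum_s' lam * \sum_x0 nrm (h s' x0)) _.
  by apply: ler_sum => s' _; apply: H.
rewrite -big_distrr /= exchange_big /= exprS -mulrA.
apply: ler_wpM2l => //.
rewrite sum_fcons big_distrr /=; apply: ler_sum => x0 _.
exact: (IH (fun x' => O (fcons x0 x'))).
Qed.

Lemma bessel (J T : finType) (a : J -> T -> C) (lam : C) : 0 < lam ->
  (forall c : J -> C, \sum_t nrm (\sum_j (a j t)^* * c j) <= lam * \sum_j nrm (c j)) ->
  forall g : T -> C, \sum_j nrm (\sum_t a j t * g t) <= lam * \sum_t nrm (g t).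
Proof.
move=> hl H g.
set c := fun j => \sum_t a j t * g t.
set w := fun t => \sum_j (a j t)^* * c j.
set S := \sum_j nrm (c j).
set G := \sum_t nrm (g t).
set W := \sum_t nrm (w t).
have hlc : lam^* = lam by apply/CrealP; apply: gtr0_real.
have e1 : \sum_t g t * (w t)^* = S.
  under eq_bigr do rewrite /w rmorph_sum big_distrr.
  rewrite exchange_big /S /nrm; apply: eq_bigr => j _ /=.
  transitivity (\sum_t (a j t * g t) * (c j)^*); last by rewrite -big_distrl.
  by apply: eq_bigr => t _; rewrite rmorphM /= conjCK mulrCA mulrA.
have e2 : \sum_t (g t)^* * w t = S.
  have hS : S^* = S.
    by rewrite /S rmorph_sum; apply: eq_bigr => j _; rewrite /nrm rmorphM /= conjCK mulrC.
  rewrite -hS -e1 rmorph_sum; apply: eq_bigr => t _.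
  by rewrite rmorphM /= conjCK mulrC.
have hW : W <= lam * S by apply: H.
have e3 : \sum_t nrm (lam * g t - w t) = lam * lam * G - lam * S - lam * S + W.
  rewrite -{1}e1 -e2 /G /W !big_distrr /= -!sumrB -big_split.
  apply: eq_bigr => t _; rewrite /nrm rmorphB rmorphM /= hlc; ring.
have h0 : 0 <= \sum_t nrm (lam * g t - w t) by apply: sumr_ge0 => t _; apply: nrm_ge0.
rewrite e3 in h0.
have h1 : lam * S <= lam * (lam * G).
  rewrite -subr_ge0; apply: le_trans h0 _.
  rewrite -subr_ge0.
  have -> : lam * (lam * G) - lam * S - (lam * lam * G - lam * S - lam * S + W) = lam * S - W by ring.
  by rewrite subr_ge0.
by rewrite ler_pM2l in h1.
Qed.

End Tensor.


Section SIC.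
Variable C : numClosedFieldType.
Variable psi : 'I_4 -> 'cV[C]_2.

Definition Aent i (p q : 'I_2) : C := 3%:R * psi i p 0 * (psi i q 0)^* - (p == q)%:R.

Lemma AentE i p q : (3%:R *: (psi i *m adjmx (psi i)) - 1%:M) p q = Aent i p q.
Proof. by rewrite !mxE big_ord1 !mxE mulrA. Qed.

Lemma braketE n (u v : 'cV[C]_n) : braket u v = \sum_(p < n) (u p 0)^* * v p 0.
Proof. by rewrite /braket mxE; apply: eq_bigr => p _; rewrite !mxE. Qed.

Lemma sum2 (F : 'I_2 -> C) : \sum_(p < 2) F p = F ord0 + F ord_max.
Proof. by rewrite big_ord_recr big_ord1; congr (F _ + _); apply: val_inj. Qed.

Lemma Aent_conj i p q : (Aent i p q)^* = Aent i q p.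
Proof. by rewrite /Aent rmorphB !rmorphM /= conjCK !conjC_nat eq_sym mulrAC. Qed.

Lemma gram_key i k :
  \sum_(p < 2) \sum_(q < 2) Aent i p q * (Aent k p q)^* =
  9%:R * (braket (psi i) (psi k))^* * braket (psi i) (psi k)
  - 3%:R * braket (psi i) (psi i) - 3%:R * braket (psi k) (psi k) + 2%:R.
Proof.
under eq_bigr do under eq_bigr do rewrite Aent_conj.
rewrite !braketE !sum2 !rmorphD !rmorphM /= !conjCK /Aent /=.
ring.
Qed.


Lemma sum4 (F : 'I_4 -> C) : \sum_(i < 4) F i = F 0 + F 1 + F 2%:R + F 3%:R.
Proof.
rewrite !big_ord_recl big_ord0 addr0 !addrA /=.
by congr (F _ + F _ + F _ + F _); apply: val_inj.
Qed.

Definition dfr p q := \sum_(i < 4) psi i p 0 * (psi i q 0)^* - 2%:R * (p == q)%:R.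

Lemma frame_key :
  \sum_(p < 2) \sum_(q < 2) dfr p q * (dfr p q)^* =
  \sum_(i < 4) \sum_(j < 4) nrm (braket (psi i) (psi j))
  - 4%:R * \sum_(i < 4) braket (psi i) (psi i) + 8%:R.
Proof.
rewrite /nrm /dfr !sum2 !sum4 !braketE !sum2.
rewrite ?rmorphD ?rmorphN ?rmorphM /= ?conjCK ?conjC_nat /=.
ring.
Qed.


Lemma sum_delta (I : finType) (j : I) (F : I -> C) : \sum_k F k * (j == k)%:R = F j.
Proof.
rewrite (bigD1 j) //= eqxx mulr1 big1 ?addr0 // => k hk.
by rewrite eq_sym (negbTE hk) mulr0.
Qed.

Hypothesis hS : qubit_SIC psi.

Lemma gram i k :
  \sum_(p < 2) \sum_(q < 2) Aent i p q * (Aent k p q)^* = 6%:R * (i == k)%:R - 1.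
Proof.
have h3 : (3%:R : C) != 0 by rewrite pnatr_eq0.
case: hS => h1 h2; rewrite gram_key.
case: (eqVneq i k) => [<-|hik].
  by rewrite h1 rmorph1 /=; ring.
rewrite -mulrA -normCKC h2 // !h1 /=; field.
by [].
Qed.

Lemma nrm_braket i j : nrm (braket (psi i) (psi j)) = if i == j then 1 else 3%:R^-1.
Proof.
case: hS => h1 h2; case: (eqVneq i j) => [<-|hij].
  by rewrite /nrm h1 rmorph1 mulr1.
by rewrite /nrm -normCK h2.
Qed.

Lemma frame p q : \sum_(i < 4) psi i p 0 * (psi i q 0)^* = 2%:R * (p == q)%:R.
Proof.
have h3 : (3%:R : C) != 0 by rewrite pnatr_eq0.
have key : \sum_(p < 2) \sum_(q < 2) dfr p q * (dfr p q)^* = 0.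
  rewrite frame_key.
  have -> : \sum_(i < 4) braket (psi i) (psi i) = 4%:R.
    by case: hS => h1 _; rewrite (eq_bigr (fun _ => 1)) ?sumr_const ?card_ord // => i _; rewrite h1.
  have -> : \sum_(i < 4) \sum_(j < 4) nrm (braket (psi i) (psi j)) = 8%:R.
    rewrite (eq_bigr (fun _ => 2%:R)).
      by rewrite sumr_const card_ord -mulr_natr; ring.
    move=> i _; rewrite (bigD1 i) //= nrm_braket eqxx.
    rewrite (eq_bigr (fun _ => 3%:R^-1)); last first.
      by move=> j hj; rewrite nrm_braket eq_sym (negbTE hj).
    by rewrite sumr_const cardC1 card_ord /=; field.
  ring.
have hnn : forall p0 : 'I_2, true -> 0 <= \sum_(q < 2) dfr p0 q * (dfr p0 q)^*.
  by move=> p0 _; apply: sumr_ge0 => q0 _; apply: mul_conjC_ge0.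
have := psumr_eq0P hnn key (i:=p) isT.
move/(psumr_eq0P (fun q0 _ => mul_conjC_ge0 (dfr p q0)))/(_ q isT)/eqP.
by rewrite mul_conjC_eq0 /dfr subr_eq0 => /eqP.
Qed.


Lemma single_bessel (c : 'I_4 -> C) :
  \sum_(t : 'I_2 * 'I_2) nrm (\sum_j (Aent j t.2 t.1)^* * c j) <= 6%:R * \sum_j nrm (c j).
Proof.
under eq_bigr do under eq_bigr do rewrite Aent_conj.
have E : forall t : 'I_2 * 'I_2, nrm (\sum_j Aent j t.1 t.2 * c j) =
    \sum_j \sum_k c j * (c k)^* * (Aent j t.1 t.2 * (Aent k t.1 t.2)^*).
  move=> t; rewrite /nrm rmorph_sum big_distrlr; apply: eq_bigr => j _.
  by apply: eq_bigr => k _; rewrite rmorphM /=; ring.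
under eq_bigr do rewrite E.
rewrite exchange_big; under eq_bigr do rewrite exchange_big.
under eq_bigr do under eq_bigr do rewrite -big_distrr.
have G : forall j k, \sum_(t : 'I_2 * 'I_2) Aent j t.1 t.2 * (Aent k t.1 t.2)^*
    = 6%:R * (j == k)%:R - 1.
  by move=> j k; rewrite -(gram j k) pair_bigA.
under eq_bigr do under eq_bigr do rewrite G.
have H : forall j, \sum_k c j * (c k)^* * (6%:R * (j == k)%:R - 1)
    = 6%:R * nrm (c j) - c j * \sum_k (c k)^*.
  move=> j.
  rewrite (eq_bigr (fun k => 6%:R * (c j * (c k)^*) * (j == k)%:R - c j * (c k)^*));
    last by move=> k _; ring.
  by rewrite sumrB sum_delta big_distrr.
under eq_bigr do rewrite H.
rewrite sumrB -big_distrr /= -big_distrl /= -rmorph_sum gerBl.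
exact: nrm_ge0.
Qed.

End SIC.


Section Quad.
Variable C : numClosedFieldType.

Lemma quadE n (A : 'M[C]_n) (v : 'cV[C]_n) :
  (adjmx v *m A *m v) 0 0 = \sum_a \sum_b (v a 0)^* * A a b * v b 0.
Proof.
rewrite mxE; under eq_bigr do rewrite mxE big_distrl /=.
rewrite exchange_big; apply: eq_bigr => a _; apply: eq_bigr => b _.
by rewrite !mxE.
Qed.

Lemma sum_delta' (I : finType) (j : I) (F : I -> C) : \sum_k F k * (k == j)%:R = F j.
Proof.
rewrite (bigD1 j) //= eqxx mulr1 big1 ?addr0 // => k hk.
by rewrite (negbTE hk) mulr0.
Qed.

Lemma quad_delta n (A : 'M[C]_n) (al be : C) k l :
  (adjmx (\col_m (al * (m == k)%:R - be * (m == l)%:R)) *m A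
     *m (\col_m (al * (m == k)%:R - be * (m == l)%:R))) 0 0
  = al^* * al * A k k - al^* * be * A k l - be^* * al * A l k + be^* * be * A l l.
Proof.
rewrite quadE.
have E1 : forall a, \sum_b ((\col_m (al * (m == k)%:R - be * (m == l)%:R)) a 0)^* * A a b *
     (\col_m (al * (m == k)%:R - be * (m == l)%:R)) b 0 =
   al^* * ((al * A a k - be * A a l) * (a == k)%:R)
   - be^* * ((al * A a k - be * A a l) * (a == l)%:R).
  move=> a.
  rewrite (eq_bigr (fun b => (al^* * (a == k)%:R - be^* * (a == l)%:R) *
     (al * (A a b * (b == k)%:R) - be * (A a b * (b == l)%:R)))); last first.
    by move=> b _; rewrite !mxE rmorphB !rmorphM /= !conjC_nat; ring.
  rewrite -big_distrr /= sumrB -!big_distrr /= !sum_delta'; ring.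
under eq_bigr do rewrite E1.
by rewrite sumrB -!big_distrr /= !sum_delta'; ring.
Qed.

Lemma psd_quad_le n (rho : 'M[C]_n) (v : 'cV[C]_n) : psd rho ->
  (adjmx v *m rho *m v) 0 0 <= (\sum_a (v a 0)^* * v a 0) * \tr rho.
Proof.
case=> _ hpsd.
set Q := (adjmx v *m rho *m v) 0 0.
set S := \sum_a (v a 0)^* * v a 0.
have h0 : 0 <= \sum_k \sum_l
   (adjmx (\col_m ((v l 0)^* * (m == k)%:R - (v k 0)^* * (m == l)%:R)) *m rho
     *m (\col_m ((v l 0)^* * (m == k)%:R - (v k 0)^* * (m == l)%:R))) 0 0.
  by apply: sumr_ge0 => k _; apply: sumr_ge0 => l _; apply: hpsd.
have T1 : \sum_k \sum_l v l 0 * (v l 0)^* * rho k k = S * \tr rho.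
  rewrite /S /mxtrace big_distrr /=; apply: eq_bigr => k _.
  by rewrite big_distrl /=; apply: eq_bigr => l _; ring.
have T4 : \sum_k \sum_l v k 0 * (v k 0)^* * rho l l = S * \tr rho.
  rewrite /S /mxtrace big_distrl /=; apply: eq_bigr => k _.
  by rewrite big_distrr /=; apply: eq_bigr => l _; ring.
have T2 : \sum_k \sum_l v l 0 * (v k 0)^* * rho k l = Q.
  rewrite /Q quadE; apply: eq_bigr => k _; apply: eq_bigr => l _; ring.
have T3 : \sum_k \sum_l v k 0 * (v l 0)^* * rho l k = Q.
  rewrite /Q quadE exchange_big; apply: eq_bigr => k _; apply: eq_bigr => l _; ring.
move: h0.
under eq_bigr do under eq_bigr do rewrite quad_delta !conjCK.
under eq_bigr do rewrite big_split !sumrB /=.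
rewrite big_split !sumrB /= T1 T2 T3 T4 => h0.
have : 0 <= (S * \tr rho - Q) + (S * \tr rho - Q).
  by apply: le_trans h0 _; rewrite le_eqVlt; apply/orP; left; apply/eqP; ring.
by rewrite -mulr2n pmulrn_lge0 // subr_ge0.
Qed.

End Quad.


Definition bits2 N (p : 'I_(2 ^ N) * 'I_(2 ^ N)) : {ffun 'I_N -> 'I_2 * 'I_2} :=
  [ffun n => (qbit n p.1, qbit n p.2)].

Lemma bits2_inj N : injective (@bits2 N).
Proof.
move=> [k l] [k' l'] /ffunP h.
have e1 : bits k = bits k'.
  by apply/ffunP => n; have := h n; rewrite !ffunE /= => -[].
have e2 : bits l = bits l'.
  by apply/ffunP => n; have := h n; rewrite !ffunE /= => -[].
by rewrite (bits_inj e1) (bits_inj e2).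
Qed.

Lemma bits2_bij N : bijective (@bits2 N).
Proof.
apply: inj_card_bij; first exact: bits2_inj.
by rewrite card_ffun !card_prod !card_ord expnMn.
Qed.

Section Main.
Variable C : numClosedFieldType.
Variable psi : 'I_4 -> 'cV[C]_2.
Hypothesis hS : qubit_SIC psi.
Variable N : nat.

Lemma sum_bits2 (F : {ffun 'I_N -> 'I_2 * 'I_2} -> C) :
  \sum_x F x = \sum_(k < 2 ^ N) \sum_(l < 2 ^ N) F (bits2 (k, l)).
Proof.
rewrite (reindex _ (onW_bij _ (@bits2_bij N))) pair_bigA.
by apply: eq_bigr => -[].
Qed.

Lemma kron_ketE (v : 'I_N -> 'cV[C]_2) a : kron_ket v a 0 = \prod_n v n (qbit n a) 0.
Proof. by rewrite mxE. Qed.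

Lemma shadowE (s : outcome N) l k :
  sic_shadow psi s l k = \prod_n Aent psi (s n) (qbit n l) (qbit n k).
Proof. by rewrite /sic_shadow /kron mxE; apply: eq_bigr => n _; rewrite AentE. Qed.

Lemma traceE (A B : 'M[C]_(2 ^ N)) : \tr (A *m B) = \sum_k \sum_l A k l * B l k.
Proof. by apply: eq_bigr => k _; rewrite mxE. Qed.

Lemma ket_norm (s : outcome N) :
  \sum_a ((kron_ket (fun n => psi (s n))) a 0)^* * (kron_ket (fun n => psi (s n))) a 0 = 1.
Proof.
under eq_bigr do rewrite kron_ketE rmorph_prod -big_split /=.
rewrite (sum_prod_bits (fun n b => (psi (s n) b 0)^* * psi (s n) b 0)).
apply: big1 => n _; rewrite -braketE; by case: hS.
Qed.

Lemma sum_quad (rho : 'M[C]_(2 ^ N)) :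
  \sum_(s : outcome N) (adjmx (kron_ket (fun n => psi (s n))) *m rho
     *m kron_ket (fun n => psi (s n))) 0 0 = 2%:R ^+ N * \tr rho.
Proof.
under eq_bigr do rewrite quadE.
rewrite exchange_big; under eq_bigr do rewrite exchange_big.
rewrite /mxtrace big_distrr /=; apply: eq_bigr => a _.
have E : forall b, \sum_(s : outcome N) ((kron_ket (fun n => psi (s n))) a 0)^* * rho a b *
    (kron_ket (fun n => psi (s n))) b 0 = (2%:R ^+ N * rho a b) * (b == a)%:R.
  move=> b.
  rewrite (eq_bigr (fun s : outcome N => rho a b *
     \prod_n ((psi (s n) (qbit n a) 0)^* * psi (s n) (qbit n b) 0))); last first.
    move=> s _; rewrite !kron_ketE rmorph_prod /= big_split /=; ring.
  rewrite -big_distrr /=.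
  rewrite -(bigA_distr_bigA (fun n i => (psi i (qbit n a) 0)^* * psi i (qbit n b) 0)) /=.
  under eq_bigr do (under eq_bigr do rewrite mulrC; rewrite frame //).
  by rewrite big_split /= prodr_const card_ord prod_delta; ring.
under eq_bigr do rewrite E.
by rewrite sum_delta'.
Qed.

End Main.


Section Main2.
Variable C : numClosedFieldType.
Variable psi : 'I_4 -> 'cV[C]_2.
Hypothesis hS : qubit_SIC psi.
Variable N : nat.
Variable O : 'M[C]_(2 ^ N).
Hypothesis hO : is_hermitian_mx O.

Lemma herm_entry k l : (O k l)^* = O l k.
Proof. by have := congr1 (fun M : 'M[C]_(2 ^ N) => M l k) hO; rewrite !mxE. Qed.

Lemma X_real (s : outcome N) :
  (\tr (O *m sic_shadow psi s))^* = \tr (O *m sic_shadow psi s).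
Proof.
rewrite !traceE rmorph_sum /= exchange_big; apply: eq_bigr => l _.
rewrite rmorph_sum; apply: eq_bigr => k _.
rewrite rmorphM /= herm_entry !shadowE rmorph_prod /=; congr (_ * _).
by apply: eq_bigr => n _; rewrite Aent_conj.
Qed.

Lemma X_bound :
  \sum_(s : outcome N) nrm (\tr (O *m sic_shadow psi s)) <= 6%:R ^+ N * \tr (O *m O).
Proof.
case: (bits2_bij N) => g gK Kg.
pose O' := fun x : {ffun 'I_N -> 'I_2 * 'I_2} => O (g x).1 (g x).2.
have HX : forall s : outcome N, \tr (O *m sic_shadow psi s) =
    \sum_x O' x * \prod_(n < N) Aent psi (s n) (x n).2 (x n).1.
  move=> s; rewrite sum_bits2 traceE; apply: eq_bigr => k _; apply: eq_bigr => l _.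
  rewrite /O' gK shadowE /=; congr (_ * _); apply: eq_bigr => n _.
  by rewrite ffunE.
have HO : \tr (O *m O) = \sum_x nrm (O' x).
  rewrite sum_bits2 traceE; apply: eq_bigr => k _; apply: eq_bigr => l _.
  by rewrite /O' /nrm gK /= herm_entry.
under eq_bigr do rewrite HX.
rewrite HO.
apply: (tensor_bound (a := fun j (t : 'I_2 * 'I_2) => Aent psi j t.2 t.1)).
  by rewrite ler0n.
apply: bessel; first by rewrite ltr0n.
exact: single_bessel.
Qed.

End Main2.

Unset Implicit Arguments.

Theorem mainTheorem1 (R : rcfType) (psi : 'I_4 -> 'cV[R[i]]_2) (N : nat)
  (rho O : 'M[R[i]]_(2 ^ N)) :
  qubit_SIC psi -> (0 < N)%N -> density_matrix rho -> is_hermitian_mx O ->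
  variance (sic_prob psi rho) (fun s => \tr (O *m sic_shadow psi s))
    <= 3%:R ^+ N * \tr (O *m O).
Proof.
move=> hS _ [hpsd htr] hO.
set p := sic_prob psi rho.
set X := fun s => \tr (O *m sic_shadow psi s).
have h2 : (2%:R ^+ N : R[i]) != 0 by rewrite expf_neq0 // pnatr_eq0.
have hi0 : (0 : R[i]) <= (2%:R ^+ N)^-1 by rewrite invr_ge0 exprn_ge0 // ler0n.
have hp0 : forall s, 0 <= p s.
  move=> s; rewrite /p /sic_prob; apply: mulr_ge0 => //.
  by case: hpsd => _; apply.
have hp1 : forall s, p s <= (2%:R ^+ N)^-1.
  move=> s; rewrite /p /sic_prob -[X in _ <= X]mulr1; apply: ler_wpM2l => //.
  have := psd_quad_le (kron_ket (fun n => psi (s n))) hpsd.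
  by rewrite ket_norm // htr mulr1.
have hsum : \sum_s p s = 1.
  rewrite /p /sic_prob -big_distrr /= sum_quad // htr mulr1 mulVf //.
have hXr : forall s, (X s)^* = X s by move=> s; apply: X_real.
have hXreal : forall s, X s \is Num.real by move=> s; apply/CrealP.
rewrite /variance /expectation -/p -/X.
set mu := \sum_s p s * X s.
have hmu : mu \is Num.real.
  by apply: rpred_sum => s _; apply: rpredM; [apply: ger0_real | ].
have E : \sum_s p s * (X s - mu) ^+ 2 = \sum_s p s * X s ^+ 2 - mu ^+ 2.
  rewrite (eq_bigr (fun s => p s * X s ^+ 2 - (2%:R * mu) * (p s * X s) + mu ^+ 2 * p s));
    last by move=> s _; ring.
  have e1 : \sum_s mu ^+ 2 * p s = mu ^+ 2 by rewrite -big_distrr /= hsum mulr1.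
  have e2 : \sum_s 2%:R * mu * (p s * X s) = 2%:R * mu * mu by rewrite -big_distrr.
  rewrite big_split sumrB /= e1 e2; ring.
rewrite E.
apply: le_trans (_ : _ <= \sum_s p s * X s ^+ 2) _.
  by rewrite gerBl real_exprn_even_ge0.
apply: le_trans (_ : _ <= (2%:R ^+ N)^-1 * \sum_s nrm (X s)) _.
  rewrite big_distrr /=; apply: ler_sum => s _.
  have -> : nrm (X s) = X s ^+ 2 by rewrite /nrm hXr expr2.
  by apply: ler_wpM2r; [apply: real_exprn_even_ge0 | apply: hp1].
apply: le_trans (_ : _ <= (2%:R ^+ N)^-1 * (6%:R ^+ N * \tr (O *m O))) _.
  by apply: ler_wpM2l => //; apply: X_bound.
have e6 : (6%:R : R[i]) ^+ N = 2%:R ^+ N * 3%:R ^+ N by rewrite -exprMn -natrM.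
by rewrite e6 -mulrA mulKf.
Qed.
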